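(* For every integer $m\ge 0$, the dimension of the subspace $F(L)^{(3,m)}$ of $F(L)$ spanned by classes with exactly $3$ letters $x$ and $m$ letters $y$ equals $\lfloor\frac{m-1}{2}\rfloor-\lfloor\frac{m-1}{3}\rfloor$.
   Context: $A=\mathbb{R}\langle x,y\rangle$; $L\subset A$ is the free Lie algebra on $x,y$ (smallest Lie subalgebra of $(A,[a,b]=ab-ba)$ containing $x,y$). $F(L)$ is the quotient of $L\otimes L$ by the span of $a\otimes b-b\otimes a$ and $a\otimes[b,c]-[a,b]\otimes c$ ($a,b,c\in L$); it is bigraded by the numbers of letters $x$ and $y$. *)

(* Defs.v *)
From mathcomp Require Import all_boot all_order all_algebra.
From mathcomp Require Import reals.
Set Implicit Arguments. Unset Strict Implicit. Unset Printing Implicit Defensive.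
Import Order.TTheory GRing.Theory Num.Theory.
Local Open Scope ring_scope.

Section FreeLie.
Variable R : realType.

(* words in the letters x (= false) and y (= true) *)
Definition word := seq bool.

(* elements of A = R<x,y>, viewed as coefficient functions on words
   (the algebra of formal series; L below lies inside the polynomials) *)
Definition ser := word -> R.

Definition sadd (f g : ser) : ser := fun w => f w + g w.
Definition sscale (c : R) (f : ser) : ser := fun w => c * f w.
Definition smul (f g : ser) : ser :=
  fun w => \sum_(i < (size w).+1) f (take i w) * g (drop i w).
Definition bracket (f g : ser) : ser := fun w => smul f g w - smul g f w.
Definition sX : ser := fun w => (w == [:: false])%:R.
Definition sY : ser := fun w => (w == [:: true])%:R.
Definition szero : ser := fun _ => 0.

Inductive inL : ser -> Prop :=
| inL_X : inL sX
| inL_Y : inL sY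
| inL_0 : inL szero
| inL_add f g : inL f -> inL g -> inL (sadd f g)
| inL_scale c f : inL f -> inL (sscale c f)
| inL_br f g : inL f -> inL g -> inL (bracket f g).

(* A (x) A realised as coefficient functions on pairs of words;
   a (x) b  ~  (u,v) |-> a(u) b(v).  Since R is a field, L (x) L embeds. *)
Definition tens := word -> word -> R.
Definition tprod (a b : ser) : tens := fun u v => a u * b v.
Definition tzero : tens := fun _ _ => 0.
Definition tadd (s t : tens) : tens := fun u v => s u v + t u v.
Definition tsub (s t : tens) : tens := fun u v => s u v - t u v.
Definition tscale (c : R) (t : tens) : tens := fun u v => c * t u v.

Inductive tspan (S : tens -> Prop) : tens -> Prop :=
| tspan_0 : tspan S tzero
| tspan_gen t : S t -> tspan S t
| tspan_add s t : tspan S s -> tspan S t -> tspan S (tadd s t)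
| tspan_scale c t : tspan S t -> tspan S (tscale c t).

Definition LL : tens -> Prop :=
  tspan (fun t => exists a b, [/\ inL a, inL b & t = tprod a b]).

(* the subspace divided out to obtain F(L) *)
Definition FLrel : tens -> Prop :=
  tspan (fun t => exists a b c, [/\ inL a, inL b, inL c &
           (t = tsub (tprod a b) (tprod b a) \/
            t = tsub (tprod a (bracket b c)) (tprod (bracket a b) c))]).

Definition homog (p q : nat) (t : tens) : Prop :=
  forall u v, t u v != 0 ->
    count negb (u ++ v) = p /\ count id (u ++ v) = q.

Definition tsum (d : nat) (c : 'I_d -> R) (b : 'I_d -> tens) : tens :=
  fun u v => \sum_(i < d) c i * b i u v.

(* The subspace F(L)^{(p,q)} of F(L) spanned by the classes of elements of
   L (x) L with p letters x and q letters y has dimension d: there are d such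
   elements whose classes form a basis of that subspace. *)
Definition FLdim (p q d : nat) : Prop :=
  exists b : 'I_d -> tens,
    [/\ (forall i, LL (b i) /\ homog p q (b i)),
        (forall c : 'I_d -> R, FLrel (tsum c b) -> forall i, c i = 0) &
        (forall t, LL t -> homog p q t ->
           exists c : 'I_d -> R, FLrel (tsub t (tsum c b)))].

End FreeLie.

(* Main.v *)
Require Import Defs.
From mathcomp Require Import all_boot all_order all_algebra.
From mathcomp Require Import reals.
From mathcomp Require Import ring lra zify.
From Stdlib Require Import FunctionalExtensionality.
Set Implicit Arguments. Unset Strict Implicit. Unset Printing Implicit Defensive.
Import GRing.Theory Num.Theory.
Local Open Scope ring_scope.
Section Tsum.
Variable V : zmodType.
Implicit Types G H : nat -> nat -> nat -> V.
Definition Tsum n (G : nat -> nat -> nat -> V) : V :=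
  \sum_(i < n.+1) \sum_(j < n.+1) \sum_(k < n.+1)
     (if (i + j + k == n)%N then G i j k else 0).

Lemma sum_delta N (c : nat) (F : nat -> V) :
  \sum_(i < N) (if (nat_of_ord i == c)%N then F i else 0) = if (c < N)%N then F c else 0.
Proof.
elim: N => [|N IH]; first by rewrite big_ord0 ltn0.
rewrite big_ord_recr /= IH.
case: (ltngtP c N) => h.
- have h1 : (c < N)%N = true by lia.
  have h2 : (N == c)%N = false by lia.
  have h3 : (c < N.+1)%N = true by lia.
  by rewrite ?h1 ?h2 ?h3 addr0.
- have h1 : (c < N)%N = false by lia.
  have h2 : (N == c)%N = false by lia.
  have h3 : (c < N.+1)%N = false by lia.
  by rewrite ?h1 ?h2 ?h3 addr0.
- by rewrite ?h ?eqxx ?ltnn ?add0r ?ltnSn.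
Qed.

Lemma T1 n G : \sum_(i < n.+1) \sum_(r < (n - i).+1) G i r (n - i - r)%N = Tsum n G.
Proof.
rewrite /Tsum; apply: eq_bigr => [[i hi]] _ /=.
have E : forall j, \sum_(k < n.+1) (if (i + j + k == n)%N then G i j k else 0)
   = if (i + j <= n)%N then G i j (n - i - j)%N else 0.
  move=> j; case: (leqP (i + j) n) => hij.
  - rewrite (eq_bigr (fun k : 'I_n.+1 => if (nat_of_ord k == n - i - j)%N then G i j k else 0)).
      by rewrite (sum_delta n.+1 (n - i - j) (G i j)) ifT //; lia.
    move=> k _; congr (if _ then _ else _); apply/eqP/eqP; lia.
  - apply: big1 => k _; rewrite ifF //; apply/negbTE/eqP; lia.
rewrite [RHS](eq_bigr (fun j : 'I_n.+1 => if (i + j <= n)%N then G i j (n - i - j)%N else 0)); last first.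
  by move=> j _; rewrite E.
rewrite (big_ord_widen n.+1 (fun r => G i r (n - i - r)%N)); last by lia.
rewrite big_mkcond; apply: eq_bigr => j _.
have -> : (j < (n - i).+1)%N = (i + j <= n)%N by apply/idP/idP; lia.
done.
Qed.

Lemma Trot n G : Tsum n G = Tsum n (fun i j k => G j k i).
Proof.
rewrite /Tsum [RHS]exchange_big /=; apply: eq_bigr => a _.
rewrite [RHS]exchange_big /=; apply: eq_bigr => b _; apply: eq_bigr => c _.
by rewrite (_ : (c + a + b = a + b + c)%N) //; lia.
Qed.

Lemma T2 n G : \sum_(i < n.+1) \sum_(r < i.+1) G r (i - r)%N (n - i)%N = Tsum n G.
Proof.
rewrite (reindex_inj rev_ord_inj) /=.
rewrite (Trot n G) -T1; apply: eq_bigr => [[i hi]] _ /=.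
rewrite subSS; apply: eq_bigr => r _.
by rewrite (_ : (n - (n - i) = i)%N) //; lia.
Qed.

Lemma TsumB n G H : Tsum n (fun i j k => G i j k - H i j k) = Tsum n G - Tsum n H.
Proof.
rewrite /Tsum -sumrB; apply: eq_bigr => i _; rewrite -sumrB; apply: eq_bigr => j _.
rewrite -sumrB; apply: eq_bigr => k _; by case: ifP; rewrite ?subr0.
Qed.
End Tsum.

Section A.
Variable R : realType.
Local Notation ser := (ser R).
Local Notation tens := (tens R).

Lemma smulE (f g : ser) n w : size w = n ->
  smul f g w = \sum_(i < n.+1) f (take i w) * g (drop i w).
Proof. by move=> <-. Qed.

Lemma smulA (f g h : ser) : smul (smul f g) h = smul f (smul g h).
Proof.
apply: functional_extensionality => w; set n := size w.
pose G := fun j k (l : nat) => f (take j w) * g (take k (drop j w)) * h (drop (j + k) w).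
transitivity (Tsum n G).
  rewrite -T2 (@smulE (smul f g) h n w erefl); apply: eq_bigr => [[i hi]] _ /=.
  rewrite (@smulE f g i); last by rewrite size_takel //; lia.
  rewrite mulr_suml; apply: eq_bigr => [[j hj]] _ /=.
  rewrite /G take_takel; last by lia.
  rewrite take_drop (_ : (j + (i - j) = i)%N) ?subnK //; lia.
rewrite -T1 (@smulE f (smul g h) n w erefl); apply: eq_bigr => [[j hj]] _ /=.
rewrite (@smulE g h (n - j)); last by rewrite size_drop.
rewrite mulr_sumr; apply: eq_bigr => [[k hk]] _ /=.
by rewrite /G drop_drop addnC mulrA.
Qed.

Lemma smulBl (a b g : ser) w :
  smul (fun x => a x - b x) g w = smul a g w - smul b g w.
Proof. by rewrite /smul -sumrB; apply: eq_bigr => i _; rewrite mulrBl. Qed.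
Lemma smulBr (a b g : ser) w :
  smul g (fun x => a x - b x) w = smul g a w - smul g b w.
Proof. by rewrite /smul -sumrB; apply: eq_bigr => i _; rewrite mulrBr. Qed.
Lemma smulZl c (a g : ser) w : smul (sscale c a) g w = c * smul a g w.
Proof. by rewrite /smul mulr_sumr; apply: eq_bigr => i _; rewrite /sscale mulrA. Qed.
Lemma smulZr c (a g : ser) w : smul g (sscale c a) w = c * smul g a w.
Proof. by rewrite /smul mulr_sumr; apply: eq_bigr => i _; rewrite /sscale mulrCA. Qed.
Lemma smul0l (g : ser) w : smul (szero R) g w = 0.
Proof. by apply: big1 => i _; rewrite /szero mul0r. Qed.
Lemma smul0r (g : ser) w : smul g (szero R) w = 0.
Proof. by apply: big1 => i _; rewrite /szero mulr0. Qed.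

Lemma jacobi (y f g : ser) :
  bracket y (bracket f g) = sadd (bracket (bracket y f) g) (bracket f (bracket y g)).
Proof.
apply: functional_extensionality => w; rewrite /sadd /bracket.
rewrite !smulBl !smulBr !smulA; ring.
Qed.

Lemma bracket_anti (f g : ser) : bracket f g = sscale (-1) (bracket g f).
Proof. by apply: functional_extensionality => w; rewrite /sscale /bracket; ring. Qed.
Lemma bracketZl c (f g : ser) : bracket (sscale c f) g = sscale c (bracket f g).
Proof. apply: functional_extensionality => w; rewrite /sscale /bracket smulZl smulZr; ring. Qed.
Lemma bracketZr c (f g : ser) : bracket f (sscale c g) = sscale c (bracket f g).
Proof. apply: functional_extensionality => w; rewrite /sscale /bracket smulZl smulZr; ring. Qed.
Lemma bracket0l (g : ser) : bracket (szero R) g = szero R.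
Proof. by apply: functional_extensionality => w; rewrite /bracket smul0l smul0r subr0. Qed.
Lemma bracket0r (g : ser) : bracket g (szero R) = szero R.
Proof. by apply: functional_extensionality => w; rewrite /bracket smul0l smul0r subr0. Qed.
Lemma bracketii (g : ser) : bracket g g = szero R.
Proof. by apply: functional_extensionality => w; rewrite /bracket subrr. Qed.

End A.
Section Tens.
Variable R : realType.
Local Notation ser := (ser R).
Local Notation tens := (tens R).

Lemma tensext (s t : tens) : (forall u v, s u v = t u v) -> s = t.
Proof. by move=> h; do 2 (apply: functional_extensionality => ?); apply: h. Qed.
Lemma serext (s t : ser) : (forall w, s w = t w) -> s = t.
Proof. by move=> h; apply: functional_extensionality. Qed.

Lemma tspan_sub (S : tens -> Prop) s t : tspan S s -> tspan S t -> tspan S (tsub s t).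
Proof.
move=> hs ht; have -> : tsub s t = tadd s (tscale (-1) t).
  by apply: tensext => u v; rewrite /tsub /tadd /tscale mulN1r.
by apply: tspan_add => //; apply: tspan_scale.
Qed.

Definition eqv (s t : tens) := FLrel (tsub s t).

Lemma eqv_refl t : eqv t t.
Proof.
rewrite /eqv (_ : tsub t t = tzero R); first exact: tspan_0.
by apply: tensext => u v; rewrite /tsub subrr.
Qed.
Lemma eqv_sym s t : eqv s t -> eqv t s.
Proof.
rewrite /eqv => h; rewrite (_ : tsub t s = tscale (-1) (tsub s t)); first exact: tspan_scale.
by apply: tensext => u v; rewrite /tsub /tscale; ring.
Qed.
Lemma eqv_trans s t r : eqv s t -> eqv t r -> eqv s r.
Proof.
rewrite /eqv => h1 h2; rewrite (_ : tsub s r = tadd (tsub s t) (tsub t r)); first exact: tspan_add.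
by apply: tensext => u v; rewrite /tsub /tadd; ring.
Qed.
Lemma eqv_add s1 t1 s2 t2 : eqv s1 t1 -> eqv s2 t2 -> eqv (tadd s1 s2) (tadd t1 t2).
Proof.
rewrite /eqv => h1 h2; rewrite (_ : tsub _ _ = tadd (tsub s1 t1) (tsub s2 t2)); first exact: tspan_add.
by apply: tensext => u v; rewrite /tsub /tadd; ring.
Qed.
Lemma eqv_scale c s t : eqv s t -> eqv (tscale c s) (tscale c t).
Proof.
rewrite /eqv => h; rewrite (_ : tsub _ _ = tscale c (tsub s t)); first exact: tspan_scale.
by apply: tensext => u v; rewrite /tsub /tscale; ring.
Qed.
Lemma eqv_eq s t : s = t -> eqv s t.
Proof. by move=> ->; apply: eqv_refl. Qed.

Lemma eqv_sym_gen a b : inL a -> inL b -> eqv (tprod a b) (tprod b a).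
Proof.
move=> ha hb; apply: tspan_gen; exists a, b, a; split=> //; by left.
Qed.
Lemma eqv_inv_gen a b c : inL a -> inL b -> inL c ->
  eqv (tprod a (bracket b c)) (tprod (bracket a b) c).
Proof.
move=> ha hb hc; apply: tspan_gen; exists a, b, c; split=> //; by right.
Qed.

Lemma tprodZl c (a b : ser) : tprod (sscale c a) b = tscale c (tprod a b).
Proof. by apply: tensext => u v; rewrite /tprod /sscale /tscale mulrA. Qed.
Lemma tprodZr c (a b : ser) : tprod a (sscale c b) = tscale c (tprod a b).
Proof. by apply: tensext => u v; rewrite /tprod /sscale /tscale mulrCA. Qed.
Lemma tprod0l (b : ser) : tprod (szero R) b = tzero R.
Proof. by apply: tensext => u v; rewrite /tprod /szero mul0r. Qed.
Lemma tprod0r (b : ser) : tprod b (szero R) = tzero R.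
Proof. by apply: tensext => u v; rewrite /tprod /szero mulr0. Qed.

Definition Good d (b : 'I_d -> tens) t := exists c : 'I_d -> R, eqv t (tsum c b).

Lemma Good0 d (b : 'I_d -> tens) : Good b (tzero R).
Proof.
exists (fun _ => 0); apply: eqv_eq; apply: tensext => u v.
by rewrite /tzero /tsum big1 // => i _; rewrite mul0r.
Qed.
Lemma GoodD d (b : 'I_d -> tens) s t : Good b s -> Good b t -> Good b (tadd s t).
Proof.
move=> [c1 h1] [c2 h2]; exists (fun i => c1 i + c2 i).
apply: (eqv_trans (eqv_add h1 h2)); apply: eqv_eq; apply: tensext => u v.
by rewrite /tadd /tsum -big_split; apply: eq_bigr => i _; rewrite mulrDl.
Qed.
Lemma GoodZ d (b : 'I_d -> tens) k t : Good b t -> Good b (tscale k t).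
Proof.
move=> [c h]; exists (fun i => k * c i).
apply: (eqv_trans (eqv_scale k h)); apply: eqv_eq; apply: tensext => u v.
by rewrite /tscale /tsum mulr_sumr; apply: eq_bigr => i _; rewrite mulrA.
Qed.
Lemma Good_eqv d (b : 'I_d -> tens) s t : eqv s t -> Good b t -> Good b s.
Proof. by move=> h [c h2]; exists c; apply: eqv_trans h h2. Qed.
Lemma Good_gen d (b : 'I_d -> tens) i : Good b (b i).
Proof.
exists (fun j => if j == i then 1 else 0); apply: eqv_eq; apply: tensext => u v.
rewrite /tsum (bigD1 i) //= eqxx mul1r big1 ?addr0 // => j /negbTE ->; by rewrite mul0r.
Qed.
End Tens.

Fixpoint wsum (V : zmodType) (k : nat) (F : word -> V) : V :=
  if k is k'.+1 then wsum k' (fun w => F (false :: w)) + wsum k' (fun w => F (true :: w))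
  else F [::].

Section Wsum.
Variable V W : zmodType.
Implicit Types F G : word -> V.

Lemma wsum_ext k F G : (forall w, size w = k -> F w = G w) -> wsum k F = wsum k G.
Proof.
elim: k F G => [|k IH] F G h /=; first by apply: h.
by congr (_ + _); apply: IH => w hw; apply: h; rewrite /= hw.
Qed.
Lemma wsum_split i j F : wsum (i + j) F = wsum i (fun u => wsum j (fun v => F (u ++ v))).
Proof. by elim: i F => [|i IH] F //=; rewrite !IH. Qed.
Lemma wsum_morph (f : V -> W) k F : f 0 = 0 -> (forall x y, f (x + y) = f x + f y) ->
  f (wsum k F) = wsum k (fun w => f (F w)).
Proof. by move=> f0 fD; elim: k F => [|k IH] F //=; rewrite fD !IH. Qed.
Lemma wsumD k F G : wsum k (fun w => F w + G w) = wsum k F + wsum k G.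
Proof. elim: k F G => [|k IH] F G //=; rewrite !IH; by rewrite addrACA. Qed.
Lemma wsum0 k : wsum k (fun _ => (0 : V)) = 0.
Proof. by elim: k => [|k IH] //=; rewrite IH addr0. Qed.
Lemma wsumN k F : wsum k (fun w => - F w) = - wsum k F.
Proof. by elim: k F => [|k IH] F //=; rewrite !IH opprD. Qed.
Lemma wsumB k F G : wsum k (fun w => F w - G w) = wsum k F - wsum k G.
Proof. by rewrite wsumD wsumN. Qed.
Lemma wsum_sum k N (F : 'I_N -> word -> V) :
  wsum k (fun w => \sum_(i < N) F i w) = \sum_(i < N) wsum k (F i).
Proof.
elim: k F => [|k IH] F //=; rewrite !IH -big_split //.
Qed.
End Wsum.
Section PsiSec.
Variable R : realType.
Local Notation ser := (ser R).
Local Notation tens := (tens R).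
Local Notation P := {poly R}.
Local Notation M3 := 'M[{poly R}]_3.

Definition yv (r : 'I_3) : P :=
  if (r : nat) == 0%N then 'X else if (r : nat) == 1%N then 0 else -1.
Definition Ym : M3 := diag_mx (\row_r yv r).
Definition Xm : M3 := \matrix_(r, s) (((s : nat) == ((r : nat).+1 %% 3))%N)%:R.

Definition rho (w : word) : M3 :=
  foldr (fun b A => (if b then Ym else Xm) *m A) 1%:M w.

Lemma rho_cat u v : rho (u ++ v) = rho u *m rho v.
Proof. elim: u => [|b u IH] /=; first by rewrite mul1mx. by rewrite IH mulmxA. Qed.

Definition rhol k (f : ser) : M3 := wsum k (fun w => (f w)%:P *: rho w).

Lemma rhol_smul k f g : rhol k (smul f g) = \sum_(i < k.+1) rhol i f *m rhol (k - i) g.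
Proof.
rewrite /rhol (wsum_ext (G := fun w => \sum_(i < k.+1)
     ((f (take i w) * g (drop i w))%:P *: rho w))); last first.
  by move=> w hw; rewrite (smulE _ _ hw) rmorph_sum scaler_suml.
rewrite wsum_sum; apply: eq_bigr => [[i hi]] _ /=.
rewrite -{1}(subnKC (_ : (i <= k)%N)); last by lia.
rewrite wsum_split.
rewrite (@wsum_morph _ _ (fun A => A *m _)); last first.
  - by move=> x y; rewrite mulmxDl.
  - by rewrite mul0mx.
apply: wsum_ext => u hu.
rewrite (@wsum_morph _ _ (fun A => _ *m A)); last first.
  - by move=> x y; rewrite mulmxDr.
  - by rewrite mulmx0.
apply: wsum_ext => v hv.
rewrite -hu take_size_cat // drop_size_cat // rho_cat.
by rewrite -scalemxAl -scalemxAr scalerA rmorphM.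
Qed.

Lemma rholB k (f g : ser) : rhol k (fun w => f w - g w) = rhol k f - rhol k g.
Proof.
rewrite /rhol -wsumB; apply: wsum_ext => w _; by rewrite rmorphB scalerBl.
Qed.

Lemma rhol_bracket k f g : rhol k (bracket f g) =
  \sum_(i < k.+1) (rhol i f *m rhol (k - i) g - rhol i g *m rhol (k - i) f).
Proof. by rewrite /bracket rholB !rhol_smul sumrB. Qed.

Definition psi n (t : tens) : P :=
  \sum_(i < n.+1) wsum i (fun u => wsum (n - i) (fun v => (t u v)%:P * \tr (rho u *m rho v))).

Lemma psi_sum n d (F : 'I_d -> tens) :
  psi n (fun u v => \sum_(l < d) F l u v) = \sum_(l < d) psi n (F l).
Proof.
rewrite /psi exchange_big /=; apply: eq_bigr => i _.
rewrite -wsum_sum; apply: wsum_ext => u _.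
rewrite -wsum_sum; apply: wsum_ext => v _.
by rewrite rmorph_sum mulr_suml.
Qed.

Lemma psi_add n s t : psi n (tadd s t) = psi n s + psi n t.
Proof.
rewrite /psi -big_split; apply: eq_bigr => i _ /=.
rewrite -wsumD; apply: wsum_ext => u _; rewrite -wsumD; apply: wsum_ext => v _.
by rewrite /tadd rmorphD mulrDl.
Qed.
Lemma psi_scale n c t : psi n (tscale c t) = c%:P * psi n t.
Proof.
rewrite /psi mulr_sumr; apply: eq_bigr => i _ /=.
rewrite (@wsum_morph _ _ (fun x => c%:P * x)); [|by rewrite mulr0|by move=> x y; rewrite mulrDr].
apply: wsum_ext => u _.
rewrite (@wsum_morph _ _ (fun x => c%:P * x)); [|by rewrite mulr0|by move=> x y; rewrite mulrDr].
by apply: wsum_ext => v _; rewrite /tscale rmorphM mulrA.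
Qed.
Lemma psi_sub n s t : psi n (tsub s t) = psi n s - psi n t.
Proof.
have -> : tsub s t = tadd s (tscale (-1) t).
  by apply: tensext => u v; rewrite /tsub /tadd /tscale mulN1r.
by rewrite psi_add psi_scale rmorphN1 mulN1r.
Qed.
Lemma psi0 n : psi n (tzero R) = 0.
Proof.
rewrite /psi big1 // => i _; rewrite (wsum_ext (G := fun _ => 0)) ?wsum0 // => u _.
by rewrite (wsum_ext (G := fun _ => 0)) ?wsum0 // => v _; rewrite /tzero mul0r.
Qed.

Lemma psi_tprod n a b :
  psi n (tprod a b) = \sum_(i < n.+1) \tr (rhol i a *m rhol (n - i) b).
Proof.
rewrite /psi; apply: eq_bigr => i _; rewrite /rhol.
rewrite (@wsum_morph _ _ (fun A => \tr (A *m _))); last first.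
  - by move=> x y; rewrite mulmxDl mxtraceD.
  - by rewrite mul0mx mxtrace0.
apply: wsum_ext => u _.
rewrite (@wsum_morph _ _ (fun A => \tr (_ *m A))); last first.
  - by move=> x y; rewrite mulmxDr mxtraceD.
  - by rewrite mulmx0 mxtrace0.
apply: wsum_ext => v _.
by rewrite -scalemxAl -scalemxAr !mxtraceZ /tprod rmorphM mulrA.
Qed.

Lemma psi_sym n a b : psi n (tprod a b) = psi n (tprod b a).
Proof.
rewrite !psi_tprod (reindex_inj rev_ord_inj) /=; apply: eq_bigr => [[i hi]] _ /=.
rewrite mxtrace_mulC subSS; congr (\tr (rhol _ _ *m rhol _ _)); lia.
Qed.

Lemma psi_inv n a b c :
  psi n (tprod a (bracket b c)) = psi n (tprod (bracket a b) c).
Proof.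
pose A i := rhol i a; pose B i := rhol i b; pose C i := rhol i c.
rewrite !psi_tprod.
transitivity (Tsum n (fun i j k => \tr (A i *m (B j *m C k)) - \tr (A i *m (C j *m B k)))).
  rewrite -T1; apply: eq_bigr => i _; rewrite rhol_bracket mulmx_sumr raddf_sum.
  by apply: eq_bigr => r _; rewrite mulmxBr raddfB.
transitivity (Tsum n (fun i j k => \tr ((A i *m B j) *m C k) - \tr ((B i *m A j) *m C k))); last first.
  rewrite -T2; apply: eq_bigr => i _; rewrite rhol_bracket mulmx_suml raddf_sum.
  by apply: eq_bigr => r _; rewrite mulmxBl raddfB.
rewrite !TsumB; congr (_ - _).
  by rewrite /Tsum; do 3 (apply: eq_bigr => ? _); rewrite mulmxA.
rewrite Trot /Tsum; do 3 (apply: eq_bigr => ? _); case: ifP => // _.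
by rewrite mulmxA mxtrace_mulC mulmxA.
Qed.

Lemma psi_FLrel n t : FLrel t -> psi n t = 0.
Proof.
elim=> [|x [a [b [c [ha hb hc [->|->]]]]]|s u _ hs _ hu|k s _ hs].
- exact: psi0.
- by rewrite psi_sub psi_sym subrr.
- by rewrite psi_sub psi_inv subrr.
- by rewrite psi_add hs hu addr0.
- by rewrite psi_scale hs mulr0.
Qed.
End PsiSec.
Section Lie.
Variable R : realType.
Local Notation ser := (ser R).
Local Notation tens := (tens R).

Fixpoint e (q : nat) : ser := if q is q'.+1 then bracket (sY R) (e q') else sX R.
Definition Theta (i j k : nat) : tens := tprod (bracket (e i) (e j)) (e k).
Fixpoint Psi0 (b i j k : nat) : tens :=
  if b is b'.+1 then Psi0 b' i.+1 j.+1 k.+1 else Theta i j k.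
Fixpoint Psi (a b i j k : nat) : tens :=
  if a is a'.+1 then
    tadd (tadd (Psi a' b i.+1 j.+1 k) (Psi a' b i j.+1 k.+1)) (Psi a' b i.+1 j k.+1)
  else Psi0 b i j k.

Lemma PsiS3 a b i j k : Psi a b.+1 i j k = Psi a b i.+1 j.+1 k.+1.
Proof. by elim: a i j k => [|a IH] i j k //=; rewrite !IH. Qed.
End Lie.

Section PsiComp.
Variable R : realType.
Local Notation ser := (ser R).
Local Notation tens := (tens R).
Local Notation P := {poly R}.
Local Notation M3 := 'M[{poly R}]_3.

Lemma rhol_sX l : rhol l (sX R) = if l == 1%N then Xm R else 0.
Proof.
case: l => [|[|l]] /=.
- by rewrite /rhol /= /sX /= mulr0n scale0r.
- by rewrite /rhol /= /sX /= mulr1n mulr0n scale0r addr0 scale1r mulmx1.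
- rewrite /rhol (wsum_ext (G := fun _ => 0)) ?wsum0 // => w hw; rewrite /sX.
  by case: eqP => [ew|_]; [rewrite ew in hw | rewrite mulr0n scale0r].
Qed.
Lemma rhol_sY l : rhol l (sY R) = if l == 1%N then Ym R else 0.
Proof.
case: l => [|[|l]] /=.
- by rewrite /rhol /= /sY /= mulr0n scale0r.
- by rewrite /rhol /= /sY /= mulr1n mulr0n scale0r add0r scale1r mulmx1.
- rewrite /rhol (wsum_ext (G := fun _ => 0)) ?wsum0 // => w hw; rewrite /sY.
  by case: eqP => [ew|_]; [rewrite ew in hw | rewrite mulr0n scale0r].
Qed.

Lemma bool_lia (b1 b2 : bool) : (b1 <-> b2) -> b1 = b2.
Proof. by move=> h; apply/idP/idP => /h. Qed.

Lemma rhol_bracket_y l g : rhol l (bracket (sY R) g) =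
  if (0 < l)%N then Ym R *m rhol l.-1 g - rhol l.-1 g *m Ym R else 0.
Proof.
rewrite rhol_bracket; case: l => [|l].
  by rewrite big_ord1 /= rhol_sY /= mul0mx mulmx0 subrr.
rewrite sumrB /=; congr (_ - _).
  rewrite (eq_bigr (fun i : 'I_l.+2 => if nat_of_ord i == 1%N then Ym R *m rhol (l.+1 - i) g else 0)).
    by rewrite (sum_delta _ _ (fun i => Ym R *m rhol (l.+1 - i) g)) /= subSS subn0.
  by move=> i _; rewrite rhol_sY; case: eqP => _ //; rewrite mul0mx.
rewrite (eq_bigr (fun i : 'I_l.+2 => if nat_of_ord i == l then rhol i g *m Ym R else 0)).
  by rewrite (sum_delta _ _ (fun i => rhol i g *m Ym R)) ltnS leqnSn.
move=> [i hi] _ /=; rewrite rhol_sY.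
rewrite (_ : (l.+1 - i == 1)%N = (i == l)); last by apply: bool_lia; split=> /eqP h; apply/eqP; lia.
by case: eqP => _ //; rewrite mulmx0.
Qed.

Fixpoint Em (q : nat) : M3 :=
  if q is q'.+1 then Ym R *m Em q' - Em q' *m Ym R else Xm R.

Lemma rhol_e l q : rhol l (e R q) = if l == q.+1 then Em q else 0.
Proof.
elim: q l => [|q IH] l; first exact: rhol_sX.
rewrite /= rhol_bracket_y; case: l => [|l] //=.
rewrite IH eqSS; case: eqP => _ //; by rewrite mulmx0 mul0mx subrr.
Qed.

Lemma sum_delta_prod l (c1 c2 : nat) (X Y : M3) : (0 < c2)%N ->
  \sum_(r < l.+1) (if nat_of_ord r == c1 then X else 0) *m (if (l - r == c2)%N then Y else 0)
  = if l == (c1 + c2)%N then X *m Y else 0.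
Proof.
move=> hc2.
rewrite (eq_bigr (fun r : 'I_l.+1 => if nat_of_ord r == c1 then
    (if l == (c1 + c2)%N then X *m Y else 0) else 0)); last first.
  move=> r _; case: eqP => [->|_]; last by rewrite mul0mx.
  rewrite (_ : (l - c1 == c2)%N = (l == c1 + c2)%N); last first.
    by apply: bool_lia; split=> /eqP h; apply/eqP; lia.
  by case: ifP => _; rewrite ?mulmx0.
rewrite (sum_delta _ _ (fun _ => if l == (c1 + c2)%N then X *m Y else 0)).
case: eqP => h; last by rewrite if_same.
by rewrite ifT //; lia.
Qed.

Lemma rhol_bre l i j : rhol l (bracket (e R i) (e R j)) =
  if l == (i + j).+2 then Em i *m Em j - Em j *m Em i else 0.
Proof.
rewrite rhol_bracket sumrB.
rewrite (eq_bigr (fun r : 'I_l.+1 => (if nat_of_ord r == i.+1 then Em i else 0) *m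
   (if (l - r == j.+1)%N then Em j else 0))); last by move=> r _; rewrite !rhol_e.
rewrite [X in _ - X](eq_bigr (fun r : 'I_l.+1 => (if nat_of_ord r == j.+1 then Em j else 0) *m
   (if (l - r == i.+1)%N then Em i else 0))); last by move=> r _; rewrite !rhol_e.
have e1 : (i.+1 + j.+1 = (i + j).+2)%N by lia.
have e2 : (j.+1 + i.+1 = (i + j).+2)%N by lia.
rewrite !sum_delta_prod // e1 e2.
by case: eqP => _; rewrite ?subrr.
Qed.

Definition fT i j k : P := \tr ((Em i *m Em j - Em j *m Em i) *m Em k).

Lemma psi_Theta n i j k :
  psi n (Theta R i j k) = if n == (i + j + k + 3)%N then fT i j k else 0.
Proof.
rewrite psi_tprod.
rewrite (eq_bigr (fun l : 'I_n.+1 => \tr ((if nat_of_ord l == (i + j).+2 then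
   Em i *m Em j - Em j *m Em i else 0) *m (if (n - l == k.+1)%N then Em k else 0))));
   last by move=> l _; rewrite rhol_bre rhol_e.
rewrite -raddf_sum sum_delta_prod // (_ : ((i + j).+2 + k.+1 = i + j + k + 3)%N); last by lia.
by rewrite /fT; case: eqP => _ //; rewrite raddf0.
Qed.
End PsiComp.
Section Trace.
Variable R : realType.
Local Notation P := {poly R}.
Local Notation M3 := 'M[{poly R}]_3.

Lemma Em_formula q : Em R q = \matrix_(r, s) (Xm R r s * (yv R r - yv R s) ^+ q).
Proof.
elim: q => [|q IH] /=; first by apply/matrixP => r s; rewrite !mxE expr0 mulr1.
rewrite IH /Ym mul_diag_mx mul_mx_diag; apply/matrixP => r s; rewrite !mxE exprS; ring.
Qed.

Definition o0 : 'I_3 := @Ordinal 3 0 isT.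
Definition o1 : 'I_3 := @Ordinal 3 1 isT.
Definition o2 : 'I_3 := @Ordinal 3 2 isT.

Lemma sum3 (F : 'I_3 -> P) : \sum_(r < 3) F r = F o0 + F o1 + F o2.
Proof.
rewrite !big_ord_recl big_ord0 addr0 addrA; congr (F _ + F _ + F _); exact: val_inj.
Qed.

Definition w0 : P := 'X.
Definition w1 : P := 1.
Definition w2 : P := -1 - 'X.

Lemma trE3 i j k : \tr (Em R i *m Em R j *m Em R k) =
  w0 ^+ i * w1 ^+ j * w2 ^+ k + w1 ^+ i * w2 ^+ j * w0 ^+ k + w2 ^+ i * w0 ^+ j * w1 ^+ k.
Proof.
rewrite !Em_formula /mxtrace sum3 !mxE !sum3 ?mxE ?sum3 /Xm !mxE /= /yv /=.
rewrite /w0 /w1 /w2 !mulr1n !mulr0n.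
rewrite !(mul0r, mulr0, add0r, addr0, mul1r, subr0, sub0r, opprK); ring.
Qed.

Definition gT i j k : P :=
  w0 ^+ i * w1 ^+ j * w2 ^+ k + w1 ^+ i * w2 ^+ j * w0 ^+ k + w2 ^+ i * w0 ^+ j * w1 ^+ k.

Lemma fT_g i j k : fT R i j k = gT i j k - gT j i k.
Proof. by rewrite /fT mulmxBl raddfB /= !trE3. Qed.

Definition s2 : P := w0 * w1 + w1 * w2 + w2 * w0.
Definition s3 : P := w0 * w1 * w2.

Lemma fT_S2 i j k : fT R i.+1 j.+1 k + fT R i j.+1 k.+1 + fT R i.+1 j k.+1 = s2 * fT R i j k.
Proof. rewrite !fT_g /gT /s2 !exprS; ring. Qed.
Lemma fT_S3 i j k : fT R i.+1 j.+1 k.+1 = s3 * fT R i j k.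
Proof. rewrite !fT_g /gT /s3 !exprS; ring. Qed.

Lemma psi_Psi0 n b i j k : psi n (Psi0 R b i j k) =
  if n == (3 * b + i + j + k + 3)%N then s3 ^+ b * fT R i j k else 0.
Proof.
elim: b i j k => [|b IH] i j k /=.
  by rewrite psi_Theta ?muln0 ?mul0n ?add0n ?expr0 ?mul1r.
rewrite IH fT_S3 (_ : (3 * b + i.+1 + j.+1 + k.+1 + 3 = 3 * b.+1 + i + j + k + 3)%N); last by lia.
by rewrite exprS mulrA [s3 ^+ b * s3]mulrC.
Qed.

Lemma psi_Psi n a b i j k : psi n (Psi R a b i j k) =
  if n == (2 * a + 3 * b + i + j + k + 3)%N then s2 ^+ a * s3 ^+ b * fT R i j k else 0.
Proof.
elim: a i j k => [|a IH] i j k /=.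
  by rewrite psi_Psi0 ?muln0 ?mul0n ?add0n ?expr0 ?mul1r.
rewrite !psi_add !IH.
rewrite (_ : (2 * a + 3 * b + i.+1 + j.+1 + k + 3 = 2 * a.+1 + 3 * b + i + j + k + 3)%N); last by lia.
rewrite (_ : (2 * a + 3 * b + i + j.+1 + k.+1 + 3 = 2 * a.+1 + 3 * b + i + j + k + 3)%N); last by lia.
rewrite (_ : (2 * a + 3 * b + i.+1 + j + k.+1 + 3 = 2 * a.+1 + 3 * b + i + j + k + 3)%N); last by lia.
case: eqP => _; last by rewrite !addr0.
rewrite -!mulrDr fT_S2 exprS; ring.
Qed.
End Trace.
Section Indep.
Variable R : realType.
Local Notation P := {poly R}.

Lemma fT012_neq0 : fT R 0 1 2 != 0.
Proof.
apply/negP => /eqP h.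
have : (fT R 0 1 2).[0] = 2.
  rewrite fT_g /gT /w0 /w1 /w2 !hornerE /=; ring.
by rewrite h horner0 => /eqP; rewrite eq_sym pnatr_eq0.
Qed.

Lemma indep d b0 (al : nat -> nat) (c : 'I_d -> R) :
  \sum_(l < d) (c l)%:P * (s2 R ^+ al l * s3 R ^+ (b0 + 2 * l) * fT R 0 1 2) = 0 ->
  forall l, c l = 0.
Proof.
pose h : P := -1 - 'X.
pose g (l : 'I_d) : P := (c l)%:P * (s2 R ^+ al l * h ^+ (b0 + 2 * l)).
have Es3 : s3 R = 'X * h by rewrite /s3 /w0 /w1 /w2 /h; ring.
move=> H.
have HQ : \sum_(l < d) 'X^(b0 + 2 * l) * g l = 0.
  have : (\sum_(l < d) 'X^(b0 + 2 * l) * g l) * fT R 0 1 2 = 0.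
    rewrite mulr_suml -[RHS]H; apply: eq_bigr => l _.
    by rewrite /g Es3 exprMn; ring.
  by move/eqP; rewrite mulf_eq0 (negbTE fT012_neq0) orbF => /eqP.
have g0 l : (s2 R ^+ al l * h ^+ (b0 + 2 * l))`_0 != 0.
  rewrite -horner_coef0 hornerM !horner_exp.
  have -> : (s2 R).[0] = -1 by rewrite /s2 /w0 /w1 /w2 !hornerE; ring.
  have -> : h.[0] = -1 by rewrite /h !hornerE; ring.
  by rewrite mulf_neq0 // expf_neq0 // oppr_eq0 oner_eq0.
suff S : forall L (l : 'I_d), (l : nat) = L -> c l = 0 by move=> l; exact: S _ l erefl.
elim/ltn_ind => L IH l hl.
have := congr1 (fun p : P => p`_(b0 + 2 * L)%N) HQ.
rewrite /= coef_sum coef0 (bigD1 l) //= big1; last first.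
  move=> l' hl'; rewrite coefXnM.
  case: ltnP => // hle.
  have hlt : (l' < L)%N.
    have : (l' : nat) != l by apply: contraNneq hl' => /val_inj ->.
    by rewrite hl; lia.
  by rewrite /g (IH l' hlt l' erefl) mul0r coef0.
rewrite addr0 coefXnM hl ltnn subnn /g coefCM => /eqP.
by rewrite mulf_eq0 (negbTE (g0 l)) orbF => /eqP.
Qed.
End Indep.
Section Span.
Variable R : realType.
Local Notation ser := (ser R).
Local Notation tens := (tens R).

Lemma inL_e q : inL (e R q).
Proof. elim: q => [|q IH] /=; [exact: inL_X | exact: inL_br (inL_Y R) IH]. Qed.

Lemma tprodDl (a b c : ser) : tprod (sadd a b) c = tadd (tprod a c) (tprod b c).
Proof. by apply: tensext => u v; rewrite /tprod /sadd /tadd mulrDl. Qed.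

Definition Fam := nat -> nat -> nat -> tens.
Definition shift3 (F : Fam) : Fam := fun i j k => F i.+1 j.+1 k.+1.
Definition S2 (F : Fam) : Fam := fun i j k =>
  tadd (tadd (F i.+1 j.+1 k) (F i j.+1 k.+1)) (F i.+1 j k.+1).

Lemma Psi_ind (Q : Fam -> Prop) :
  Q (Theta R) -> (forall F, Q F -> Q (shift3 F)) -> (forall F, Q F -> Q (S2 F)) ->
  forall a b, Q (Psi R a b).
Proof.
move=> h0 h3 h2 a b; elim: a => [|a IH].
  have -> : Psi R 0 b = Psi0 R b by [].
  elim: b => [|b IH] //; exact: h3 IH.
exact: h2 IH.
Qed.

Lemma FL_eq (s t : tens) : s = t -> FLrel s -> FLrel t.
Proof. by move=> ->. Qed.

Lemma Psi_anti a b i j k : FLrel (tadd (Psi R a b i j k) (Psi R a b j i k)).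
Proof.
move: i j k; apply: (Psi_ind (Q := fun F => forall i j k, FLrel (tadd (F i j k) (F j i k)))).
- move=> i j k; apply: (@FL_eq (tzero R)); last exact: tspan_0.
  apply: tensext => u v; rewrite /tadd /Theta /tprod /tzero [bracket (e R j) _]bracket_anti /sscale.
  ring.
- by move=> F h i j k; apply: h.
- move=> F h i j k; have := tspan_add (tspan_add (h i.+1 j.+1 k) (h i j.+1 k.+1)) (h i.+1 j k.+1).
  apply: FL_eq; apply: tensext => u v; rewrite /S2 /tadd; ring.
Qed.

Lemma Psi_cyc a b i j k : eqv (Psi R a b i j k) (Psi R a b j k i).
Proof.
move: i j k; apply: (Psi_ind (Q := fun F => forall i j k, eqv (F i j k) (F j k i))).
- move=> i j k; rewrite /Theta.
  apply: eqv_trans (eqv_sym (eqv_inv_gen (inL_e i) (inL_e j) (inL_e k))) _.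
  exact: eqv_sym_gen (inL_e i) (inL_br (inL_e j) (inL_e k)).
- by move=> F h i j k; apply: h.
- move=> F h i j k; have := eqv_add (eqv_add (h i.+1 j.+1 k) (h i j.+1 k.+1)) (h i.+1 j k.+1).
  rewrite /eqv; apply: FL_eq; apply: tensext => u v; rewrite /S2 /tadd /tsub; ring.
Qed.

Lemma Theta_delta i j k :
  FLrel (tadd (tadd (Theta R i.+1 j k) (Theta R i j.+1 k)) (Theta R i j k.+1)).
Proof.
have h := eqv_inv_gen (inL_br (inL_e i) (inL_e j)) (inL_Y R) (inL_e k).
have E : bracket (bracket (e R i) (e R j)) (sY R) =
   sscale (-1) (sadd (bracket (e R i.+1) (e R j)) (bracket (e R i) (e R j.+1))).
  by rewrite bracket_anti jacobi.
move: h; rewrite E tprodZl tprodDl /eqv; apply: FL_eq.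
apply: tensext => u v; rewrite /Theta /= /tsub /tadd /tscale; ring.
Qed.

Lemma Psi_delta a b i j k :
  FLrel (tadd (tadd (Psi R a b i.+1 j k) (Psi R a b i j.+1 k)) (Psi R a b i j k.+1)).
Proof.
move: i j k; apply: (Psi_ind (Q := fun F => forall i j k,
   FLrel (tadd (tadd (F i.+1 j k) (F i j.+1 k)) (F i j k.+1)))).
- exact: Theta_delta.
- by move=> F h i j k; apply: h.
- move=> F h i j k; have := tspan_add (tspan_add (h i.+1 j.+1 k) (h i j.+1 k.+1)) (h i.+1 j k.+1).
  apply: FL_eq; apply: tensext => u v; rewrite /S2 /tadd; ring.
Qed.

Lemma Psi_ii a b i k : eqv (Psi R a b i i k) (tzero R).
Proof.
have := tspan_scale (1/2) (Psi_anti a b i i k); rewrite /eqv; apply: FL_eq.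
apply: tensext => u v; rewrite /tsub /tadd /tscale /tzero subr0.
by field.
Qed.

Lemma Psi_anti' a b i j k : eqv (Psi R a b i j k) (tscale (-1) (Psi R a b j i k)).
Proof.
have := Psi_anti a b i j k; rewrite /eqv; apply: FL_eq.
by apply: tensext => u v; rewrite /tsub /tadd /tscale; ring.
Qed.

Lemma Psi_red a b i j k : eqv (Psi R a b i.+3 j k)
  (tadd (tscale (-1) (Psi R a.+1 b i.+1 j k)) (Psi R a b.+1 i j k)).
Proof.
have := Psi_delta a b i.+2 j k; rewrite /eqv; apply: FL_eq.
rewrite PsiS3 /=; apply: tensext => u v; rewrite /tsub /tadd /tscale; ring.
Qed.

Definition dimF (M : nat) : nat :=
  if (M < 3)%N then 0%N else
  if (3 * ((M - 3) %% 2) <= M - 3)%N then (((M - 3 - 3 * ((M - 3) %% 2)) %/ 6).+1)%N else 0%N.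
Definition betaF (M l : nat) : nat := ((M - 3) %% 2 + 2 * l)%N.
Definition alphaF (M l : nat) : nat := ((M - 3 - 3 * betaF M l) %/ 2)%N.
Definition Bas (M : nat) (l : 'I_(dimF M)) : tens := Psi R (alphaF M l) (betaF M l) 0 1 2.
Definition GoodM M t := Good (@Bas M) t.

Lemma Good_012 a b : GoodM (2 * a + 3 * b + 3) (Psi R a b 0 1 2).
Proof.
set M := (2 * a + 3 * b + 3)%N.
have hl : (b %/ 2 < dimF M)%N.
  rewrite /dimF /M; case: ifP => h1; first lia.
  rewrite ifT; lia.
have -> : Psi R a b 0 1 2 = Bas (Ordinal hl).
  rewrite /Bas /alphaF /betaF /=.
  have hb : ((M - 3) %% 2 + 2 * (b %/ 2) = b)%N by rewrite /M; lia.
  rewrite hb (_ : ((M - 3 - 3 * b) %/ 2 = a)%N) //; rewrite /M; lia.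
exact: Good_gen.
Qed.

Lemma GoodM_eqv M s t : eqv s t -> GoodM M t -> GoodM M s.
Proof. exact: Good_eqv. Qed.

Lemma Claim n : forall a b i j k, (i + j + k = n)%N ->
  GoodM (2 * a + 3 * b + i + j + k) (Psi R a b i j k).
Proof.
elim/ltn_ind: n => n IH.
have first3 : forall a b i j k, (i + j + k = n)%N -> (3 <= i)%N ->
    GoodM (2 * a + 3 * b + i + j + k) (Psi R a b i j k).
  move=> a b i j k hn hi.
  have -> : i = (i - 3)%N.+3 by lia.
  apply: GoodM_eqv (Psi_red _ _ _ _ _) _.
  apply: GoodD; first apply: GoodZ.
  - have := IH (i - 3 + 1 + j + k)%N _ a.+1 b (i - 3)%N.+1 j k.
    rewrite (_ : (2 * a.+1 + 3 * b + (i - 3)%N.+1 + j + k = 2 * a + 3 * b + (i - 3)%N.+3 + j + k)%N);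
      last by lia.
    apply; lia.
  - have := IH (i - 3 + j + k)%N _ a b.+1 (i - 3)%N j k.
    rewrite (_ : (2 * a + 3 * b.+1 + (i - 3)%N + j + k = 2 * a + 3 * b + (i - 3)%N.+3 + j + k)%N);
      last by lia.
    apply; lia.
move=> a b i j k hn.
case: (leqP 3 i) => hi; first exact: first3.
case: (leqP 3 j) => hj.
  apply: GoodM_eqv (Psi_cyc _ _ _ _ _) _.
  rewrite (_ : (2 * a + 3 * b + i + j + k = 2 * a + 3 * b + j + k + i)%N); last by lia.
  apply: first3 => //; lia.
case: (leqP 3 k) => hk.
  apply: GoodM_eqv (eqv_trans (Psi_cyc _ _ _ _ _) (Psi_cyc _ _ _ _ _)) _.
  rewrite (_ : (2 * a + 3 * b + i + j + k = 2 * a + 3 * b + k + i + j)%N); last by lia.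
  apply: first3 => //; lia.
have Z : forall M t, eqv t (tzero R) -> GoodM M t.
  move=> M t ht; apply: GoodM_eqv ht _; exact: Good0.
case: (eqVneq i j) => [<-|hij]; first by apply: Z; exact: Psi_ii.
case: (eqVneq j k) => [<-|hjk].
  apply: Z; apply: eqv_trans (Psi_cyc _ _ _ _ _) _; exact: Psi_ii.
case: (eqVneq i k) => [<-|hik].
  apply: Z; apply: eqv_trans (Psi_cyc _ _ _ _ _) _.
  apply: eqv_trans (Psi_cyc _ _ _ _ _) _; exact: Psi_ii.
move/eqP: hij => hij; move/eqP: hjk => hjk; move/eqP: hik => hik.
have hM : (2 * a + 3 * b + i + j + k = 2 * a + 3 * b + 3)%N by lia.
rewrite hM.
have G := Good_012 a b.
have Gc : forall i' j' k', eqv (Psi R a b i' j' k') (Psi R a b 0 1 2) ->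
    GoodM (2 * a + 3 * b + 3) (Psi R a b i' j' k').
  by move=> i' j' k' h; apply: GoodM_eqv h G.
have Ga : forall i' j' k', eqv (Psi R a b i' j' k') (tscale (-1) (Psi R a b 0 1 2)) ->
    GoodM (2 * a + 3 * b + 3) (Psi R a b i' j' k').
  by move=> i' j' k' h; apply: GoodM_eqv h (GoodZ _ G).
have C1 := Psi_cyc a b.
have A1 := Psi_anti' a b.
have [[? ?]|[[? ?]|[[? ?]|[[? ?]|[[? ?]|[? ?]]]]]] :
  (i = 0 /\ j = 1)%N \/ (i = 1 /\ j = 2)%N \/ (i = 2 /\ j = 0)%N \/
  (i = 1 /\ j = 0)%N \/ (i = 0 /\ j = 2)%N \/ (i = 2 /\ j = 1)%N.
  by lia.
- by subst; rewrite (_ : k = 2%N); [exact: G | lia].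
- subst; rewrite (_ : k = 0%N); last lia.
  apply: Gc; apply: eqv_sym; exact: C1.
- subst; rewrite (_ : k = 1%N); last lia.
  apply: Gc; apply: eqv_sym; apply: eqv_trans (C1 _ _ _) (C1 _ _ _).
- subst; rewrite (_ : k = 2%N); last lia.
  by apply: Ga; exact: A1.
- subst; rewrite (_ : k = 1%N); last lia.
  apply: Ga; apply: eqv_trans (A1 _ _ _) _; apply: eqv_scale.
  apply: eqv_sym; apply: eqv_trans (C1 _ _ _) (C1 _ _ _).
- subst; rewrite (_ : k = 0%N); last lia.
  apply: Ga; apply: eqv_trans (A1 _ _ _) _; apply: eqv_scale.
  apply: eqv_sym; exact: C1.
Qed.

Lemma Good_Theta i j k : GoodM (i + j + k) (Theta R i j k).
Proof. by have := @Claim (i + j + k)%N 0 0 i j k erefl; rewrite !muln0 !add0n. Qed.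
End Span.
Inductive tree := Lx | Ly | Br of tree & tree.
Fixpoint xd t := match t with Lx => 1%N | Ly => 0%N | Br a b => (xd a + xd b)%N end.
Fixpoint yd t := match t with Lx => 0%N | Ly => 1%N | Br a b => (yd a + yd b)%N end.

Section Trees.
Variable R : realType.
Local Notation ser := (ser R).
Local Notation tens := (tens R).

Fixpoint ev (t : tree) : ser :=
  match t with Lx => sX R | Ly => sY R | Br a b => bracket (ev a) (ev b) end.

Lemma inL_ev t : inL (ev t).
Proof. elim: t => [||a ha b hb] /=; [exact: inL_X | exact: inL_Y | exact: inL_br]. Qed.

Lemma sscaleA c d (f : ser) : sscale c (sscale d f) = sscale (c * d) f.
Proof. by apply: serext => w; rewrite /sscale mulrA. Qed.
Lemma sscale0 (f : ser) : sscale 0 f = szero R.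
Proof. by apply: serext => w; rewrite /sscale mul0r. Qed.
Lemma sscale1 (f : ser) : sscale 1 f = f.
Proof. by apply: serext => w; rewrite /sscale mul1r. Qed.

Lemma trees0 t : xd t = 0%N -> (ev t = sY R /\ yd t = 1%N) \/ ev t = szero R.
Proof.
elim: t => [||a IHa b IHb] //=; first by left.
move=> h; right.
have [ha hb] : xd a = 0%N /\ xd b = 0%N by lia.
case: (IHa ha) => [[-> _]|->]; last by rewrite bracket0l.
case: (IHb hb) => [[-> _]|->]; last by rewrite bracket0r.
exact: bracketii.
Qed.

Lemma trees1 t : xd t = 1%N -> exists c, ev t = sscale c (e R (yd t)).
Proof.
elim: t => [||a IHa b IHb] //=; first by move=> _; exists 1; rewrite sscale1.
move=> h.
have [[ha hb]|[ha hb]] : (xd a = 1 /\ xd b = 0 \/ xd a = 0 /\ xd b = 1)%N by lia.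
- have [c ->] := IHa ha.
  case: (trees0 hb) => [[-> ->]|->]; last by exists 0; rewrite bracket0r sscale0.
  exists (- c); rewrite addn1 /= bracketZl bracket_anti sscaleA; congr sscale; ring.
- have [c ->] := IHb hb.
  case: (trees0 ha) => [[-> ->]|->]; last by exists 0; rewrite bracket0l sscale0.
  by exists c; rewrite add1n /= bracketZr.
Qed.

Lemma redP A : xd A = 2%N -> forall q, GoodM (yd A + q) (tprod (ev A) (e R q)).
Proof.
elim: A => [||a IHa b IHb] //= h q.
have [[ha hb]|[[ha hb]|[ha hb]]] :
  (xd a = 2 /\ xd b = 0 \/ xd a = 0 /\ xd b = 2 \/ xd a = 1 /\ xd b = 1)%N by lia.
- case: (trees0 hb) => [[-> ->]|->]; last by rewrite bracket0r tprod0l; exact: Good0.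
  apply: GoodM_eqv (eqv_sym (eqv_inv_gen (inL_ev a) (inL_Y R) (inL_e R q))) _.
  have := IHa ha q.+1; rewrite (_ : (yd a + 1 + q = yd a + q.+1)%N) //; lia.
- case: (trees0 ha) => [[-> ->]|->]; last by rewrite bracket0l tprod0l; exact: Good0.
  rewrite bracket_anti tprodZl; apply: GoodZ.
  apply: GoodM_eqv (eqv_sym (eqv_inv_gen (inL_ev b) (inL_Y R) (inL_e R q))) _.
  have := IHb hb q.+1; rewrite (_ : (1 + yd b + q = yd b + q.+1)%N) //; lia.
- have [c1 ->] := trees1 ha; have [c2 ->] := trees1 hb.
  rewrite bracketZl bracketZr !tprodZl; apply: GoodZ; apply: GoodZ.
  exact: Good_Theta.
Qed.

Lemma yleft T : xd T = 3%N -> GoodM (1 + yd T) (tprod (sY R) (ev T)).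
Proof.
case: T => [||b1 b2] //= h.
have [[h1 h2]|[[h1 h2]|[[h1 h2]|[h1 h2]]]] :
  (xd b1 = 0 /\ xd b2 = 3 \/ xd b1 = 1 /\ xd b2 = 2 \/ xd b1 = 2 /\ xd b2 = 1 \/
   xd b1 = 3 /\ xd b2 = 0)%N by lia.
- apply: GoodM_eqv (eqv_inv_gen (inL_Y R) (inL_ev b1) (inL_ev b2)) _.
  case: (trees0 h1) => [[-> _]|->]; first by rewrite bracketii tprod0l; exact: Good0.
  by rewrite bracket0r tprod0l; exact: Good0.
- apply: GoodM_eqv (eqv_inv_gen (inL_Y R) (inL_ev b1) (inL_ev b2)) _.
  have [c ->] := trees1 h1; rewrite bracketZr tprodZl; apply: GoodZ.
  apply: GoodM_eqv (eqv_sym_gen (inL_e R (yd b1).+1) (inL_ev b2)) _.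
  have := redP h2 (yd b1).+1; rewrite (_ : (1 + (yd b1 + yd b2) = yd b2 + (yd b1).+1)%N) //; lia.
- apply: GoodM_eqv (eqv_inv_gen (inL_Y R) (inL_ev b1) (inL_ev b2)) _.
  have [c ->] := trees1 h2; rewrite tprodZr; apply: GoodZ.
  have := @redP (Br Ly b1) h1 (yd b2) => /=.
  by rewrite addnA.
- case: (trees0 h2) => [[-> _]|->]; last by rewrite bracket0r tprod0r; exact: Good0.
  rewrite bracket_anti tprodZr; apply: GoodZ.
  apply: GoodM_eqv (eqv_inv_gen (inL_Y R) (inL_Y R) (inL_ev b1)) _.
  by rewrite bracketii tprod0l; exact: Good0.
Qed.

Lemma pairP T1 T2 : (xd T1 + xd T2 = 3)%N -> GoodM (yd T1 + yd T2) (tprod (ev T1) (ev T2)).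
Proof.
move=> h.
have [[h1 h2]|[[h1 h2]|[[h1 h2]|[h1 h2]]]] :
  (xd T1 = 0 /\ xd T2 = 3 \/ xd T1 = 1 /\ xd T2 = 2 \/ xd T1 = 2 /\ xd T2 = 1 \/
   xd T1 = 3 /\ xd T2 = 0)%N by lia.
- case: (trees0 h1) => [[-> ->]|->]; last by rewrite tprod0l; exact: Good0.
  exact: yleft.
- have [c ->] := trees1 h1; rewrite tprodZl; apply: GoodZ.
  apply: GoodM_eqv (eqv_sym_gen (inL_e R _) (inL_ev T2)) _.
  by rewrite addnC; apply: redP.
- have [c ->] := trees1 h2; rewrite tprodZr; apply: GoodZ.
  exact: redP.
- apply: GoodM_eqv (eqv_sym_gen (inL_ev T1) (inL_ev T2)) _.
  case: (trees0 h2) => [[-> ->]|->]; last by rewrite tprod0l; exact: Good0.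
  by rewrite addnC; apply: yleft.
Qed.
End Trees.
Section Final.
Variable R : realType.
Local Notation ser := (ser R).
Local Notation tens := (tens R).

Definition shom p q (f : ser) := forall w, f w != 0 -> count negb w = p /\ count id w = q.

Lemma sum_neq0 (I : Type) (r : seq I) (F : I -> R) :
  \sum_(i <- r) F i != 0 -> exists i, F i != 0.
Proof.
elim: r => [|x r IH]; first by rewrite big_nil eqxx.
rewrite big_cons; case: (eqVneq (F x) 0) => [hx|hx] h; last by exists x.
by rewrite hx add0r in h; apply: IH.
Qed.

Lemma mul_neq0 (a b : R) : a * b != 0 -> a != 0 /\ b != 0.
Proof. by move=> h; split; apply: contraNneq h => ->; rewrite ?mul0r ?mulr0. Qed.

Lemma shom_smul p1 q1 p2 q2 f g : shom p1 q1 f -> shom p2 q2 g ->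
  forall w, smul f g w != 0 -> count negb w = (p1 + p2)%N /\ count id w = (q1 + q2)%N.
Proof.
move=> hf hg w /sum_neq0 [i /mul_neq0 [h1 h2]].
have [a1 b1] := hf _ h1; have [a2 b2] := hg _ h2.
by rewrite -(cat_take_drop i w) !count_cat a1 a2 b1 b2.
Qed.

Lemma shom_bracket p1 q1 p2 q2 f g : shom p1 q1 f -> shom p2 q2 g ->
  shom (p1 + p2) (q1 + q2) (bracket f g).
Proof.
move=> hf hg w h.
case: (eqVneq (smul f g w) 0) => h1.
  have h2 : smul g f w != 0 by move: h; rewrite /bracket h1 sub0r oppr_eq0.
  by have [-> ->] := shom_smul hg hf h2; rewrite addnC [(q2 + _)%N]addnC.
exact: shom_smul hf hg w h1.
Qed.

Lemma shom_ev t : shom (xd t) (yd t) (ev R t).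
Proof.
elim: t => [||a ha b hb] /=.
- move=> w; rewrite /sX; case: (eqVneq w [:: false]) => [->|hne] //.
  by rewrite mulr0n eqxx.
- move=> w; rewrite /sY; case: (eqVneq w [:: true]) => [->|hne] //.
  by rewrite mulr0n eqxx.
- exact: shom_bracket.
Qed.

Lemma shom_e q : shom 1 q (e R q).
Proof.
elim: q => [|q IH] /=; first exact: (@shom_ev Lx).
by have := shom_bracket (@shom_ev Ly) IH; rewrite add0n add1n.
Qed.

Lemma homog_tprod p1 q1 p2 q2 a b : shom p1 q1 a -> shom p2 q2 b ->
  homog (p1 + p2) (q1 + q2) (tprod a b).
Proof.
move=> ha hb u v /mul_neq0 [h1 h2].
have [a1 b1] := ha _ h1; have [a2 b2] := hb _ h2.
by rewrite !count_cat a1 a2 b1 b2.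
Qed.

Lemma homog_add p q (s t : tens) : homog p q s -> homog p q t -> homog p q (tadd s t).
Proof.
move=> hs ht u v h; case: (eqVneq (s u v) 0) => h1; last exact: hs.
by apply: ht; move: h; rewrite /tadd h1 add0r.
Qed.
Lemma homog_eq p q p' q' (t : tens) : p = p' -> q = q' -> homog p q t -> homog p' q' t.
Proof. by move=> -> ->. Qed.

Lemma homog_Theta i j k : homog 3 (i + j + k) (Theta R i j k).
Proof.
exact: homog_tprod (shom_bracket (@shom_e i) (@shom_e j)) (@shom_e k).
Qed.

Lemma homog_Psi0 b i j k : homog 3 (3 * b + i + j + k) (Psi0 R b i j k).
Proof.
elim: b i j k => [|b IH] i j k /=; first by rewrite muln0 add0n; exact: homog_Theta.
apply: homog_eq (IH _ _ _) => //; lia.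
Qed.

Lemma homog_Psi a b i j k : homog 3 (2 * a + 3 * b + i + j + k) (Psi R a b i j k).
Proof.
elim: a i j k => [|a IH] i j k /=; first by rewrite muln0 add0n; exact: homog_Psi0.
apply: homog_add; first apply: homog_add.
all: apply: homog_eq (IH _ _ _) => //; lia.
Qed.

Lemma LL_Psi a b i j k : LL (Psi R a b i j k).
Proof.
move: i j k; apply: (Psi_ind (Q := fun F => forall i j k, LL (F i j k))).
- move=> i j k; apply: tspan_gen; exists (bracket (e R i) (e R j)), (e R k); split => //.
  + exact: inL_br (inL_e R i) (inL_e R j).
  + exact: inL_e.
- by move=> F h i j k; apply: h.
- by move=> F h i j k; apply: tspan_add; [apply: tspan_add|]; apply: h.
Qed.

Definition lin (s : seq (R * tree)) : ser := fun w => \sum_(p <- s) p.1 * ev R p.2 w.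

Lemma smul_lin s1 s2 w : smul (lin s1) (lin s2) w =
  \sum_(p <- s1) \sum_(q <- s2) p.1 * q.1 * smul (ev R p.2) (ev R q.2) w.
Proof.
rewrite /smul /lin.
rewrite (eq_bigr (fun i : 'I_(size w).+1 => \sum_(p <- s1) \sum_(q <- s2)
   p.1 * q.1 * (ev R p.2 (take i w) * ev R q.2 (drop i w)))); last first.
  move=> i _; rewrite mulr_suml; apply: eq_bigr => p _; rewrite mulr_sumr.
  by apply: eq_bigr => q _; ring.
rewrite exchange_big; apply: eq_bigr => p _; rewrite exchange_big; apply: eq_bigr => q _.
by rewrite mulr_sumr.
Qed.

Lemma inL_lin f : inL f -> exists s, f = lin s.
Proof.
move=> hf; elim: hf => [| | |a b _ [s1 ->] _ [s2 ->]|c a _ [s ->]|a b _ [s1 ->] _ [s2 ->]].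
- by exists [:: (1, Lx)]; apply: serext => w; rewrite /lin big_seq1 mul1r.
- by exists [:: (1, Ly)]; apply: serext => w; rewrite /lin big_seq1 mul1r.
- by exists [::]; apply: serext => w; rewrite /lin big_nil.
- by exists (s1 ++ s2); apply: serext => w; rewrite /sadd /lin big_cat.
- exists [seq (c * p.1, p.2) | p <- s]; apply: serext => w.
  rewrite /sscale /lin big_map mulr_sumr; apply: eq_bigr => p _ /=; by rewrite mulrA.
- exists [seq (p.1 * q.1, Br p.2 q.2) | p <- s1, q <- s2]; apply: serext => w.
  rewrite /lin big_allpairs_dep /bracket !smul_lin [X in _ - X]exchange_big -sumrB.
  apply: eq_bigr => p _; rewrite -sumrB; apply: eq_bigr => q _ /=; rewrite /bracket; ring.
Qed.

Definition lin2 (s : seq (R * tree * tree)) : tens :=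
  fun u v => \sum_(p <- s) p.1.1 * (ev R p.1.2 u * ev R p.2 v).

Lemma LL_lin2 t : LL t -> exists s, t = lin2 s.
Proof.
move=> hL; elim: hL => [|x [a [b [ha hb ->]]]|s0 t0 _ [s1 ->] _ [s2 ->]|c t0 _ [s ->]].
- by exists [::]; apply: tensext => u v; rewrite /lin2 big_nil.
- have [s1 ->] := inL_lin ha; have [s2 ->] := inL_lin hb.
  exists [seq (p.1 * q.1, p.2, q.2) | p <- s1, q <- s2]; apply: tensext => u v.
  rewrite /lin2 big_allpairs_dep /tprod /lin mulr_suml; apply: eq_bigr => p _.
  rewrite mulr_sumr; apply: eq_bigr => q _ /=; ring.
- by exists (s1 ++ s2); apply: tensext => u v; rewrite /tadd /lin2 big_cat.
- exists [seq (c * p.1.1, p.1.2, p.2) | p <- s]; apply: tensext => u v.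
  rewrite /tscale /lin2 big_map mulr_sumr; apply: eq_bigr => p _ /=; by rewrite mulrA.
Qed.

Lemma LL_homog_Good m (t : tens) : LL t -> homog 3 m t -> GoodM m t.
Proof.
move=> /LL_lin2 [s ->] hh.
pose P (p : R * tree * tree) := ((xd p.1.2 + xd p.2 == 3) && (yd p.1.2 + yd p.2 == m))%N.
have key : forall u v (p : R * tree * tree),
    p.1.1 * (ev R p.1.2 u * ev R p.2 v) != 0 ->
    count negb (u ++ v) = (xd p.1.2 + xd p.2)%N /\ count id (u ++ v) = (yd p.1.2 + yd p.2)%N.
  move=> u v p /mul_neq0 [_ /mul_neq0 [hu hv]].
  have [a1 b1] := shom_ev hu; have [a2 b2] := shom_ev hv.
  by rewrite !count_cat a1 a2 b1 b2.
have E : lin2 s = lin2 (filter P s).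
  apply: tensext => u v; rewrite /lin2 big_filter.
  case: (boolP ((count negb (u ++ v) == 3) && (count id (u ++ v) == m))%N) => hc.
  - rewrite [RHS]big_mkcond; apply: eq_bigr => p _; case: ifP => // hP.
    apply/eqP; apply: contraFT hP => /key [k1 k2].
    move: hc => /andP [/eqP c1 /eqP c2]; rewrite /P; apply/andP; split; apply/eqP; lia.
  - have -> : \sum_(p <- s) p.1.1 * (ev R p.1.2 u * ev R p.2 v) = 0.
      apply/eqP; apply: contraNT hc => /hh [k1 k2]; by rewrite k1 k2 !eqxx.
    symmetry; apply: big1 => p hP; apply/eqP; apply: contraNT hc => /key [k1 k2].
    move: hP => /andP [/eqP c1 /eqP c2]; rewrite k1 k2 c1 c2 !eqxx //.
rewrite E; elim: s {E hh} => [|p s IH].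
  rewrite (_ : lin2 _ = tzero R); first exact: Good0.
  by apply: tensext => u v; rewrite /lin2 big_nil.
rewrite /=; case: ifP => hP //.
rewrite (_ : lin2 _ = tadd (tscale p.1.1 (tprod (ev R p.1.2) (ev R p.2))) (lin2 (filter P s))); last first.
  by apply: tensext => u v; rewrite /lin2 big_cons.
apply: GoodD => //; apply: GoodZ.
move: hP => /andP [/eqP h1 /eqP h2]; rewrite -h2; exact: pairP.
Qed.

Lemma psi_tsum n d (c : 'I_d -> R) (b : 'I_d -> tens) :
  psi n (tsum c b) = \sum_(l < d) (c l)%:P * psi n (b l).
Proof. rewrite /tsum psi_sum; apply: eq_bigr => l _; exact: (psi_scale n (c l) (b l)). Qed.

Lemma dimF_arith m (l : nat) : (l < dimF m)%N ->
  (2 * alphaF m l + 3 * betaF m l + 3 = m)%N.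
Proof. rewrite /dimF /alphaF /betaF; case: ifP => h1 //; case: ifP => h2 // h; lia. Qed.

End Final.

Theorem mainTheorem10 (R : realType) (m : nat) :
  exists d : nat, FLdim R 3 m d /\
    (d%:Z = ((m%:Z - 1) %/ 2)%Z - ((m%:Z - 1) %/ 3)%Z).
Proof.
exists (dimF m); split; last first.
  rewrite /dimF; case: ifP => h1; [|case: ifP => h2]; lia.
exists (@Bas R m); split.
- move=> l; split; first exact: LL_Psi.
  have := @homog_Psi R (alphaF m l) (betaF m l) 0 1 2.
  by rewrite !addn0 (_ : (2 * alphaF m l + 3 * betaF m l + 1 + 2 = m)%N) //;
    have := dimF_arith (ltn_ord l); lia.
- move=> c hc.
  have := psi_FLrel (m + 3) hc; rewrite psi_tsum.
  rewrite (eq_bigr (fun l : 'I_(dimF m) => (c l)%:P * (s2 R ^+ alphaF m l *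
     s3 R ^+ ((m - 3) %% 2 + 2 * l) * fT R 0 1 2))); last first.
    move=> l _; rewrite /Bas psi_Psi ifT //.
    have := dimF_arith (ltn_ord l); rewrite /betaF => h.
    by apply/eqP; lia.
  exact: indep.
- move=> t ht hh; exact: LL_homog_Good.
Qed.
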